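(* Let $\gamma>0$, $v\in[0,1]^N$ and $r\in[0,1]^N$, and let $$q\in\arg\max_{\rho\in\Delta(\mathcal{S})}\;\mathbb{E}_{S\sim\rho}[R(S,v,r)]-\frac{(K+1)^4}{\gamma}\sum_{i=1}^N\log\frac{1}{w_i(\rho)}.$$ Then $$\max_{S^\star\in\mathcal{S}}R(S^\star,v,r)-\mathbb{E}_{S\sim q}[R(S,v,r)]\le\frac{N(K+1)^4}{\gamma},$$ and for every $S\in\mathcal{S}$, $$\sum_{i\in S}\frac{1}{w_i(q)}\le N+\frac{\gamma}{(K+1)^4}\Big(\max_{S^\star\in\mathcal{S}}R(S^\star,v,r)-R(S,v,r)\Big).$$
   Context: $N\ge K\ge1$ are integers and $\mathcal{S}$ is the collection of subsets $S\subseteq[N]$ with $1\le|S|\le K$; $\Delta(\mathcal{S})$ is the set of probability distributions on $\mathcal{S}$. For $S\in\mathcal{S}$, $v,r\in[0,1]^N$, $R(S,v,r)=\frac{\sum_{i\in S}r_iv_i}{1+\sum_{i\in S}v_i}$. For $\rho\in\Delta(\mathcal{S})$, $w_i(\rho)=\sum_{S\in\mathcal{S}:\,i\in S}\rho(S)$ (the probability that item $i$ belongs to a set drawn from $\rho$). *)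

(* Defs.v *)
From HB Require Import structures.
From mathcomp Require Import all_boot all_order all_algebra.
From mathcomp Require Import all_classical all_reals all_analysis.
Set Implicit Arguments. Unset Strict Implicit. Unset Printing Implicit Defensive.
Import Order.TTheory GRing.Theory Num.Theory.
Local Open Scope ring_scope.

Section Defs.
Variables (R : realType) (N K : nat).

Definition admissible (S : {set 'I_N}) : bool := (0 < #|S|)%N && (#|S| <= K)%N.

(* rho in \Delta(\mathcal{S}): a probability distribution on \mathcal{S},
   represented as a function on all subsets vanishing off \mathcal{S}. *)
Definition is_distr (rho : {set 'I_N} -> R) : Prop :=
  (forall S, 0 <= rho S) /\ (forall S, ~~ admissible S -> rho S = 0) /\
  \sum_(S | admissible S) rho S = 1.

Definition w (rho : {set 'I_N} -> R) (i : 'I_N) : R :=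
  \sum_(S | admissible S && (i \in S)) rho S.

Definition Rev (S : {set 'I_N}) (v r : 'I_N -> R) : R :=
  (\sum_(i in S) r i * v i) / (1 + \sum_(i in S) v i).

Definition ERev (rho : {set 'I_N} -> R) (v r : 'I_N -> R) : R :=
  \sum_(S | admissible S) rho S * Rev S v r.

(* max_{S* in \mathcal{S}} R(S*, v, r)  (revenues are >= 0 and \mathcal{S} is
   nonempty, so the neutral element 0 is harmless) *)
Definition maxRev (v r : 'I_N -> R) : R :=
  \big[Num.max/0]_(S | admissible S) Rev S v r.

Definition obj (gamma : R) (rho : {set 'I_N} -> R) (v r : 'I_N -> R) : R :=
  ERev rho v r - ((K.+1)%:R ^+ 4 / gamma) * \sum_(i < N) ln ((w rho i)^-1).

(* The objective
   equals -infinity when some w_i(rho) = 0, so a maximizer has all w_i > 0 and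
   it suffices to compare against distributions with all w_i > 0. *)
Definition is_argmax (gamma : R) (q : {set 'I_N} -> R) (v r : 'I_N -> R) : Prop :=
  is_distr q /\ (forall i, 0 < w q i) /\
  forall rho, is_distr rho -> (forall i, 0 < w rho i) ->
    obj gamma rho v r <= obj gamma q v r.

End Defs.

(* Main.v *)
Require Import Defs.
From HB Require Import structures.
From mathcomp Require Import all_boot all_order all_algebra.
From mathcomp Require Import all_classical all_reals all_analysis.
From mathcomp Require Import ring lra.
Import Order.TTheory GRing.Theory Num.Theory.
Local Open Scope ring_scope.

Lemma ln_sub_ge {R : realType} {a b : R} : 0 < a -> 0 < b ->
  1 - a / b <= ln b - ln a.
Proof.
move=> ha hb.
have e : ln (a / b) = ln a - ln b.
  have := @lnM R a b^-1; rewrite !posrE invr_gt0 => -> //.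
  have := @lnV R b; rewrite posrE => -> //.
have := @le_ln1Dx R (a / b - 1).
rewrite addrCA subrr addr0 e => h.
have hab : 0 < a / b by apply: divr_gt0.
have := h ltac:(lra). lra.
Qed.

Lemma term_ge {R : realType} (w s t : R) : 0 < w -> 0 <= s -> 0 < t -> t <= 1/2 ->
  t * ((s - w) / w) - t ^+ 2 * (2 * ((s - w) / w) ^+ 2)
    <= ln ((1 - t) * w + t * s) - ln w.
Proof.
move=> hw hs ht ht2.
set a := (s - w) / w.
have wt : (1 - t) * w + t * s = w * (1 + t * a).
  by rewrite /a; field; rewrite gt_eqF.
have ha : -1 <= a.
  rewrite /a mulrBl divff ?gt_eqF //.
  have : 0 <= s / w by apply: divr_ge0 => //; apply: ltW.
  lra.
set u := t * a.
have hu : -1/2 <= u by rewrite /u; nra.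
have hpos : 0 < 1 + u by lra.
have hb : 0 < w * (1 + u) by apply: mulr_gt0.
have := ln_sub_ge hw hb; rewrite -wt => h.
apply: le_trans h.
have e : w / (w * (1 + u)) = (1 + u)^-1.
  by field; rewrite !gt_eqF.
rewrite wt e.
set z := (1 + u)^-1.
have hz : z * (1 + u) = 1 by rewrite /z mulVf // gt_eqF.
have hz0 : 0 < z by rewrite /z invr_gt0.
have -> : t ^+ 2 * (2 * a ^+ 2) = 2 * u ^+ 2 by rewrite /u; ring.
have : (u - 2 * u ^+ 2 - (1 - z)) * (1 + u) <= 0.
  have -> : (u - 2 * u ^+ 2 - (1 - z)) * (1 + u) = - (u ^+ 2 * (1 + 2 * u)).
    have e2 : (1 - z) * (1 + u) = u by rewrite mulrBl mul1r hz; ring.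
    by rewrite [LHS](mulrBl (1 + u)) e2; ring.
  rewrite oppr_le0; apply: mulr_ge0; first exact: sqr_ge0.
  lra.
move=> h; nra.
Qed.

Lemma eps_le {R : realType} (x M : R) :
  (forall t, 0 < t -> t <= 1/2 -> x <= t * M) -> x <= 0.
Proof.
move=> h; rewrite leNgt; apply/negP => hx.
case: (lerP M 0) => hM.
  have := h (1/2) ltac:(lra) ltac:(lra). nra.
set t := x / (2 * (M + x)).
have ht : t * (2 * (M + x)) = x by rewrite /t; field; lra.
have := h t; rewrite /t.
have t0 : 0 < t by rewrite /t; apply: divr_gt0; lra.
move: ht t0; rewrite -/t => ht t0 ht'.
have := ht' t0 ltac:(nra). nra.
Qed.

Lemma sum_delta {R : realType} {T : finType} (P : pred T) (S : T) (F : T -> R) :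
  \sum_(S' | P S') (S' == S)%:R * F S' = if P S then F S else 0.
Proof.
rewrite big_mkcond (bigD1 S) //= eqxx mul1r big1 ?addr0 //.
move=> S' /negbTE ->; rewrite mul0r; by case: (P S').
Qed.

Lemma sum_delta1 {R : realType} {T : finType} (P : pred T) (S : T) :
  \sum_(S' | P S') (S' == S)%:R = (if P S then 1 else 0 : R).
Proof.
rewrite -(sum_delta P S (fun _ => 1)); apply: eq_bigr => ? _; by rewrite mulr1.
Qed.

Theorem lemma4 (R : realType) (N K : nat) (hK1 : (1 <= K)%N) (hKN : (K <= N)%N)
  (gamma : R) (hg : 0 < gamma) (v r : 'I_N -> R)
  (hv : forall i, 0 <= v i <= 1) (hr : forall i, 0 <= r i <= 1)
  (q : {set 'I_N} -> R) (hq : is_argmax K gamma q v r) :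
  maxRev K v r - ERev K q v r <= N%:R * (K.+1)%:R ^+ 4 / gamma /\
  forall S : {set 'I_N}, admissible K S ->
    \sum_(i in S) (w K q i)^-1
      <= N%:R + gamma / (K.+1)%:R ^+ 4 * (maxRev K v r - Rev S v r).
Proof.
move: hq => [[q0 [qn qs]] [wpos opt]].
set p := (K.+1)%:R ^+ 4 : R.
have pp : 0 < p by rewrite /p exprn_gt0 // ltr0n.
set c := p / gamma.
have cp : 0 < c by apply: divr_gt0.
set E := ERev K q v r.
have key : forall S, admissible K S ->
    Rev S v r - E + c * (\sum_(i in S) (w K q i)^-1 - N%:R) <= 0.
  move=> S hS.
  pose s i : R := if i \in S then 1 else 0.
  pose a i := (s i - w K q i) / w K q i.
  have hA : \sum_(i < N) a i = \sum_(i in S) (w K q i)^-1 - N%:R.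
    rewrite /a.
    have -> : \sum_(i < N) (s i - w K q i) / w K q i
        = \sum_(i < N) (s i / w K q i - 1).
      apply: eq_bigr => i _; rewrite mulrBl divff // gt_eqF //.
    rewrite sumrB sumr_const card_ord; congr (_ - _).
    rewrite [RHS]big_mkcond; apply: eq_bigr => i _; rewrite /s; case: ifP => _; [by rewrite mul1r | by rewrite mul0r].
  rewrite -hA.
  apply: (@eps_le R _ (c * \sum_(i < N) (2 * a i ^+ 2))) => t t0 t2.
  pose rho S' := (1 - t) * q S' + t * (S' == S)%:R.
  have hw : forall i, w K rho i = (1 - t) * w K q i + t * s i.
    move=> i; rewrite /w /rho big_split /= -!mulr_sumr; congr (_ + _ * _).
    by rewrite sum_delta1 hS /s.
  have hs0 : forall i, 0 <= s i by move=> i; rewrite /s; case: ifP.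
  have wrpos : forall i, 0 < w K rho i.
    move=> i; rewrite hw; have := wpos i; have := hs0 i; nra.
  have hd : is_distr K rho.
    split; [|split].
    - move=> S'; rewrite /rho; have := q0 S'; move=> hq0; apply: addr_ge0; [apply: mulr_ge0 => //; lra | apply: mulr_ge0 => //; lra].
    - move=> S' hS'; rewrite /rho qn //.
      case: eqP => [eS|_]; last by rewrite mulr0 mulr0 addr0.
      by move: hS'; rewrite eS hS.
    - rewrite /rho big_split /= -mulr_sumr qs.
      rewrite -mulr_sumr sum_delta1 hS; lra.
  have hE : ERev K rho v r = (1 - t) * E + t * Rev S v r.
    rewrite /ERev /rho.
    under eq_bigr do rewrite mulrDl -!mulrA.
    rewrite big_split /= -!mulr_sumr sum_delta hS //.
  have ho := opt rho hd wrpos.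
  move: ho; rewrite /obj -/p -/c hE -/E.
  have lninv : forall (f : 'I_N -> R), (forall i, 0 < f i) ->
      \sum_(i < N) ln ((f i)^-1) = - \sum_(i < N) ln (f i).
    move=> f hf; rewrite -sumrN; apply: eq_bigr => i _.
    by have := @lnV R (f i); rewrite posrE => ->.
  rewrite (lninv _ wrpos) (lninv _ wpos) => ho.
  have hl : t * \sum_(i < N) a i - t ^+ 2 * \sum_(i < N) (2 * a i ^+ 2)
      <= \sum_(i < N) ln (w K rho i) - \sum_(i < N) ln (w K q i).
    rewrite !mulr_sumr -!sumrB; apply: ler_sum => i _.
    rewrite hw; apply: term_ge => //.
  move: ho hl.
  set L1 := \sum_(i < N) ln (w K rho i).
  set L0 := \sum_(i < N) ln (w K q i).
  set A := \sum_(i < N) a i.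
  set B := \sum_(i < N) (2 * a i ^+ 2).
  set RS := Rev S v r.
  move=> ho hl.
  have h2 : t * (RS - E) + c * (t * A - t ^+ 2 * B) <= 0.
    have : c * (t * A - t ^+ 2 * B) <= c * (L1 - L0) by apply: ler_wpM2l => //; apply: ltW.
    nra.
  have h3 : t * (RS - E + c * A - t * (c * B)) <= 0.
    have -> : t * (RS - E + c * A - t * (c * B)) = t * (RS - E) + c * (t * A - t ^+ 2 * B) by ring.
    exact: h2.
  rewrite pmulr_rle0 // in h3; lra.
have Rev0 : forall S, 0 <= Rev S v r.
  move=> S; rewrite /Rev; apply: divr_ge0.
    apply: sumr_ge0 => i _; apply: mulr_ge0; [by case/andP: (hr i) | by case/andP: (hv i)].
  apply: addr_ge0 => //; apply: sumr_ge0 => i _; by case/andP: (hv i).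
have E0 : 0 <= E by rewrite /E /ERev; apply: sumr_ge0 => S _; apply: mulr_ge0.
have Emax : E <= maxRev K v r.
  rewrite /E /ERev.
  apply: (@le_trans _ _ (\sum_(S | admissible K S) q S * maxRev K v r)).
    apply: ler_sum => S hS; apply: ler_wpM2l => //.
    exact: le_bigmax_cond.
  by rewrite -mulr_suml qs mul1r.
split.
  have -> : N%:R * p / gamma = N%:R * c by rewrite /c mulrA.
  have : maxRev K v r <= E + N%:R * c.
    apply: bigmax_le.
      apply: addr_ge0 => //; apply: mulr_ge0 => //; exact: ltW.
    move=> S hS; have := key S hS.
    have : 0 <= \sum_(i in S) (w K q i)^-1.
      apply: sumr_ge0 => i _; rewrite invr_ge0; exact: ltW.
    nra.
  lra.
move=> S hS; have := key S hS.
set Sg := \sum_(i in S) (w K q i)^-1.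
move=> hk.
have e : Sg - N%:R = gamma / p * (c * (Sg - N%:R)).
  by rewrite /c; field; rewrite !gt_eqF.
have : Sg - N%:R <= gamma / p * (maxRev K v r - Rev S v r).
  rewrite e; apply: ler_wpM2l; first by apply: ltW; apply: divr_gt0.
  lra.
lra.
Qed.
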